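(* Let $a,g,h$ be positive integers with $\sigma(a)\neq 2a$, and let $b,c$ be coprime integers with $c>0$ and $\dfrac{b}{c}=\dfrac{a}{2a-\sigma(a)}$. Let $m,n$ be coprime positive integers with $\dfrac{\sigma(g)}{\sigma(h)}=\dfrac{m}{n}$, and put $e=b(mh+ng)-(2b-c)m\,\sigma(h)$, assumed nonzero. Let $x,y$ be positive integers with $$(ex-nbg)(ey-nbg)=n^2b^2g^2+nb(h-g)e,$$ and put $p=x-1$, $q=y-1$, $r=\frac{m}{n}xy-1$. Suppose $p,q,r$ are primes with $p\neq q$, and that the factors are relatively prime: $a,g,p,q$ are pairwise coprime and $a,h,r$ are pairwise coprime. Then $agpq$ and $ahr$ are amicable numbers.
   Context: For a positive integer $N$, $\sigma(N)$ denotes the sum of all positive divisors of $N$. Positive integers $M,N$ are amicable if $\sigma(M)-M=N$ and $\sigma(N)-N=M$. *)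

(* Defs.v *)
From HB Require Import structures.
From mathcomp Require Import all_boot all_order all_algebra.
Set Implicit Arguments. Unset Strict Implicit. Unset Printing Implicit Defensive.
Import Order.TTheory GRing.Theory Num.Theory.

Definition sigma (N : nat) : nat := (\sum_(d <- divisors N) d)%N.

Definition amicable (M N : nat) : Prop :=
  [/\ (0 < M)%N, (0 < N)%N, (sigma M - M = N)%N & (sigma N - N = M)%N].

(* Main.v *)
Require Import Defs.
From mathcomp Require Import all_boot all_order all_algebra.
From mathcomp Require Import ring.
Import Order.TTheory GRing.Theory Num.Theory.

Lemma sig_dp (u v : nat) : (0 < u)%N -> (0 < v)%N -> coprime u v -> sigma (u * v) = (sigma u * sigma v)%N.
Proof.
move=> u0 v0 cuv.
have uv0 : (0 < u * v)%N by rewrite muln_gt0 u0.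
rewrite /sigma big_distrlr /=.
rewrite -(@big_allpairs_dep _ _ _ _ _ _ (fun d1 d2 => d1 * d2)%N (divisors u) (fun=> divisors v) id).
apply: perm_big; apply: uniq_perm.
- exact: divisors_uniq.
- apply: allpairs_uniq; [exact: divisors_uniq| exact: divisors_uniq|].
  move=> [d1 d2] [d1' d2'] /allpairsP[[i1 i2] [/= h1 h2 [-> ->]]] /allpairsP[[j1 j2] [/= k1 k2 [-> ->]]] /= E.
  rewrite -!dvdn_divisors // in h1 h2 k1 k2.
  have G : forall x y, x %| u -> y %| v -> gcdn u (x * y) = x.
    move=> x y xu yv; rewrite Gauss_gcdl; first by apply/gcdn_idPr.
    exact: coprime_dvdr yv cuv.
  have e1 : i1 = j1 by rewrite -(G i1 i2) // E G.
  subst j1; congr pair.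
  have i10 : (0 < i1)%N by apply: dvdn_gt0 h1.
  by apply/eqP; rewrite -(eqn_pmul2l i10) E.
- move=> d; rewrite -dvdn_divisors //; apply/idP/allpairsP.
  + move=> dd; exists (gcdn d u, gcdn d v); split => /=; rewrite -?dvdn_divisors ?dvdn_gcdr //.
    apply/eqP; rewrite eqn_dvd; apply/andP; split.
      have h1 : d %| gcdn d u * v by rewrite muln_gcdl dvdn_gcd dvdn_mulr.
      by rewrite muln_gcdr dvdn_gcd dvdn_mull.
    rewrite Gauss_dvd ?dvdn_gcdl //.
    exact: coprime_dvdl (dvdn_gcdr _ _) (coprime_dvdr (dvdn_gcdr _ _) cuv).
  + move=> [[d1 d2] [/= h1 h2 ->]]; rewrite -!dvdn_divisors // in h1 h2.
    exact: dvdn_mul.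
Qed.
Lemma sig_prime p : prime p -> sigma p = p.+1.
Proof.
move=> pp; have p0 := prime_gt0 pp; have p1 := prime_gt1 pp.
rewrite /sigma (perm_big [:: 1; p]%N).
  by rewrite big_cons big_seq1 /= add1n.
apply: uniq_perm; first exact: divisors_uniq.
  by rewrite /= inE andbT; case: eqP p1 => // <-.
move=> d; rewrite -dvdn_divisors // !inE.
by case/primeP: pp => _ H; apply/idP/idP => [/H|/orP[]/eqP->] //; rewrite ?dvd1n.
Qed.

Lemma sig_gt0 N : (0 < N)%N -> (0 < sigma N)%N.
Proof. by move=> N0; rewrite /sigma (big_rem N) ?divisors_id // addn_gt0 N0. Qed.

Local Open Scope ring_scope.

Theorem mainTheorem10
  (a g h : nat) (b c : int) (m n x y p q r : nat) (e : int) :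
  (0 < a)%N -> (0 < g)%N -> (0 < h)%N ->
  sigma a != (2 * a)%N ->
  coprimez b c -> 0 < c ->
  (b%:~R / c%:~R : rat) = (a%:R / ((2 * a)%:R - (sigma a)%:R)) ->
  (0 < m)%N -> (0 < n)%N -> coprime m n ->
  ((sigma g)%:R / (sigma h)%:R : rat) = m%:R / n%:R ->
  e = b * (m%:Z * h%:Z + n%:Z * g%:Z) - (2 * b - c) * m%:Z * (sigma h)%:Z ->
  e != 0 ->
  (0 < x)%N -> (0 < y)%N ->
  (e * x%:Z - n%:Z * b * g%:Z) * (e * y%:Z - n%:Z * b * g%:Z)
    = n%:Z ^+ 2 * b ^+ 2 * g%:Z ^+ 2 + n%:Z * b * (h%:Z - g%:Z) * e ->
  p = (x - 1)%N -> q = (y - 1)%N ->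
  (r%:R : rat) = m%:R / n%:R * x%:R * y%:R - 1 ->
  prime p -> prime q -> prime r -> p != q ->
  coprime a g -> coprime a p -> coprime a q ->
  coprime g p -> coprime g q -> coprime p q ->
  coprime a h -> coprime a r -> coprime h r ->
  amicable (a * g * p * q)%N (a * h * r)%N.
Proof.
move=> a0 g0 h0 sa _ c0 Hbc m0 n0 _ Hgh He e0 x0 y0 Hxy Hp Hq Hr pp pq pr _
  cag cap caq cgp cgq cpq cah car chr.
have p0 := prime_gt0 pp; have q0 := prime_gt0 pq; have r0 := prime_gt0 pr.
have hx : x = p.+1 by rewrite Hp subn1 prednK.
have hy : y = q.+1 by rewrite Hq subn1 prednK.
set s := sigma a; set G := sigma g; set H := sigma h.
have H0 : (0 < H)%N := sig_gt0 h h0.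
have I1 : b * ((2*a)%:Z - s%:Z) = a%:Z * c.
  have hc' : (c%:~R : rat) != 0 by rewrite intr_eq0 gt_eqF.
  have hd : ((2 * a)%:R - s%:R : rat) != 0 by rewrite subr_eq0 eqr_nat eq_sym.
  move: Hbc => /eqP; rewrite eqr_div // => /eqP Hbc.
  apply/eqP; rewrite -(eqr_int rat); apply/eqP.
  transitivity (b%:~R * ((2 * a)%:R - s%:R) : rat); first by ring.
  rewrite Hbc; ring.
have I2 : G%:Z * n%:Z = m%:Z * H%:Z.
  have hH : (H%:R : rat) != 0 by rewrite pnatr_eq0 -lt0n.
  have hn : (n%:R : rat) != 0 by rewrite pnatr_eq0 -lt0n.
  move: Hgh => /eqP; rewrite eqr_div // => /eqP Hgh.
  apply/eqP; rewrite -(eqr_int rat); apply/eqP.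
  transitivity (G%:R * n%:R : rat); first by ring.
  rewrite Hgh; ring.
have I5 : r%:Z * n%:Z = m%:Z * x%:Z * y%:Z - n%:Z.
  have hn : (n%:R : rat) != 0 by rewrite pnatr_eq0 -lt0n.
  apply/eqP; rewrite -(eqr_int rat); apply/eqP.
  transitivity (r%:R * n%:R : rat); first by ring.
  by rewrite Hr; field.
have I4 : e * x%:Z * y%:Z - n%:Z * b * g%:Z * (x%:Z + y%:Z) - n%:Z * b * (h%:Z - g%:Z) = 0.
  have : e * (e * x%:Z * y%:Z - n%:Z * b * g%:Z * (x%:Z + y%:Z) - n%:Z * b * (h%:Z - g%:Z)) = 0.
    transitivity ((e * x%:Z - n%:Z * b * g%:Z) * (e * y%:Z - n%:Z * b * g%:Z)
      - (n%:Z ^+ 2 * b ^+ 2 * g%:Z ^+ 2 + n%:Z * b * (h%:Z - g%:Z) * e)); first by ring.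
    by rewrite Hxy subrr.
  by move/eqP; rewrite mulf_eq0 (negbTE e0) /= => /eqP.
have b0 : b != 0.
  apply/eqP => b0; move: I1; rewrite b0 mul0r => /esym/eqP.
  by rewrite mulf_eq0 gt_eqF //= gt_eqF.
have K1 : (s * G * x * y = a * g * p * q + a * h * r)%N.
  apply/eqP; rewrite -eqz_nat; apply/eqP.
  have bn0 : b * n%:Z != 0 by rewrite mulf_neq0 // -lt0n.
  apply: (mulfI bn0).
  have Hp' : p%:Z = x%:Z - 1 by rewrite hx -addn1 PoszD addrK.
  have Hq' : q%:Z = y%:Z - 1 by rewrite hy -addn1 PoszD addrK.
  rewrite !PoszD !PoszM Hp' Hq'.
apply/eqP; rewrite -subr_eq0; apply/eqP.
  transitivity (b * s%:Z * x%:Z * y%:Z * (G%:Z * n%:Z - m%:Z * H%:Z)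
    - m%:Z * H%:Z * x%:Z * y%:Z * (b * ((2*a)%:Z - s%:Z) - a%:Z * c)
    - a%:Z * (e * x%:Z * y%:Z - n%:Z * b * g%:Z * (x%:Z + y%:Z) - n%:Z * b * (h%:Z - g%:Z))
    + a%:Z * x%:Z * y%:Z * (e - (b * (m%:Z * h%:Z + n%:Z * g%:Z) - (2 * b - c) * m%:Z * H%:Z))
    - a%:Z * h%:Z * b * (r%:Z * n%:Z - (m%:Z * x%:Z * y%:Z - n%:Z))); first by ring.
  by rewrite I4 I2 I1 I5 -He !subrr; ring.
have K2 : (s * H * r.+1 = s * G * x * y)%N.
  apply/eqP; rewrite -eqz_nat; apply/eqP.
  have nn0 : n%:Z != 0 by rewrite -lt0n.
  apply: (mulfI nn0).
  rewrite !PoszM -addn1 PoszD.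
  transitivity (s%:Z * H%:Z * (r%:Z * n%:Z + n%:Z)); first by ring.
  rewrite I5.
  transitivity (s%:Z * (m%:Z * H%:Z) * x%:Z * y%:Z); first by ring.
  rewrite -I2; ring.
have SM : sigma (a * g * p * q) = (s * G * x * y)%N.
  rewrite (sig_dp (a * g * p) q) ?muln_gt0 ?a0 ?g0 ?p0 ?coprimeMl ?caq ?cgq ?cpq //.
  rewrite (sig_dp (a * g) p) ?muln_gt0 ?a0 ?g0 ?p0 ?coprimeMl ?cap ?cgp //.
  by rewrite (sig_dp a g) // (sig_prime p pp) (sig_prime q pq) hx hy.
have SN : sigma (a * h * r) = (s * H * r.+1)%N.
  rewrite (sig_dp (a * h) r) ?muln_gt0 ?a0 ?h0 ?r0 ?coprimeMl ?car ?chr //.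
  by rewrite (sig_dp a h) // (sig_prime r pr).
split.
- by rewrite !muln_gt0 a0 g0 p0 q0.
- by rewrite !muln_gt0 a0 h0 r0.
- by rewrite SM K1 addKn.
- by rewrite SN K2 K1 addnK.
Qed.
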